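(* Let $G$ be a finite group and let $H=A\oplus B$ be the algebra constructed below. Then $H$ is a semisimple associative algebra, $A$ is a central subalgebra of $H$, and $B$ is a two-sided ideal of $H$.
   Context: Let $\mathbb C[G]$ be the group algebra and $A$ its center, with basis $E_\alpha=\sum_{g\in\alpha}g$ over conjugacy classes $\alpha$. Let $M(G)=\operatorname{End}(\mathbb C[G])$ with matrix units $E_{g_1,g_2}$ with respect to the basis $G$ ($E_{g_1,g_2}(h)=\delta_{g_2,h}g_1$). Two ordered pairs $(g_1,g_2),(g'_1,g'_2)$ are conjugate if $g'_i=gg_ig^{-1}$ for some $g\in G$. For each conjugacy class $\beta$ of ordered pairs $(s_1,s_2)$ of elements with $s_1^2=s_2^2=1$ put $E_\beta=\sum_{(s',s'')\in\beta}E_{s',s''}$, and let $B\subset M(G)$ be the span of the $E_\beta$. Let $V:\mathbb C[G]\to M(G)$ be the representation $V(g)(x)=gxg^{-1}$ and $V_\alpha=V(E_\alpha)$. $H=A\oplus B$ (as vector space) carries the multiplication given by the products in $A$ and in $B$ (matrix product) and $E_\alpha E_\beta=V_\alpha E_\beta$, $E_\beta E_\alpha=E_\beta V_\alpha$, extended bilinearly. *)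

(* Defs.v *)
From HB Require Import structures.
From mathcomp Require Import all_boot all_order all_algebra all_fingroup all_field.
Set Implicit Arguments. Unset Strict Implicit. Unset Printing Implicit Defensive.
Import GRing.Theory Num.Theory.
Local Open Scope ring_scope.
Local Open Scope group_scope.

Section Generic.
Variable V : lmodType algC.
Implicit Types (S I Hs : V -> Prop) (mul : V -> V -> V).

Definition subspace S := S 0%R /\ (forall (c : algC) x y, S x -> S y -> S (c *: x + y)%R).

Definition two_sided_ideal Hs mul I :=
  [/\ subspace I, (forall x, I x -> Hs x) &
      forall x y, Hs x -> I y -> I (mul x y) /\ I (mul y x)].

Definition nprod mul (x : V) (s : seq V) := foldl mul x s.

(* I is nilpotent: some power I^(n+1) vanishes *)
Definition nilpotent_set mul I :=
  exists n : nat, forall (x : V) (s : n.-tuple V),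
    I x -> (forall i, I (tnth s i)) -> nprod mul x s = 0%R.

(* semisimple (finite-dimensional) algebra: no nonzero nilpotent two-sided
   ideal, i.e. the (Jacobson) radical is zero *)
Definition semisimple_alg Hs mul :=
  forall I, two_sided_ideal Hs mul I -> nilpotent_set mul I -> forall x, I x -> x = 0%R.

Definition assoc_unital_alg Hs mul :=
  [/\ forall x y, Hs x -> Hs y -> Hs (mul x y),
      forall x y z, Hs x -> Hs y -> Hs z -> mul x (mul y z) = mul (mul x y) z
    & exists2 e, Hs e & forall x, Hs x -> mul e x = x /\ mul x e = x].

Definition central_subalgebra Hs mul S :=
  [/\ subspace S, (forall x, S x -> Hs x),
      (forall x y, S x -> S y -> S (mul x y)) &
      forall x y, S x -> Hs y -> mul x y = mul y x].
End Generic.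

Section Construction.
Variable gT : finGroupType.

(* C[G] : coefficient functions; M(G) = End(C[G]) : matrices indexed by G x G,
   m (g1, g2) is the coefficient of E_{g1,g2} *)
Local Notation CG := {ffun gT -> algC^o}.
Local Notation MG := {ffun gT * gT -> algC^o}.

Definition ga_mul (a b : CG) : CG :=
  [ffun x => \sum_(y : gT) a y * b (y^-1 * x)%g]%R.

(* E_alpha = sum of the elements of the conjugacy class alpha *)
Definition Eclass (al : {set gT}) : CG := [ffun x => ((x \in al) : nat)%:R]%R.

(* A = center of C[G] = span of the E_alpha *)
Definition inA (a : CG) : Prop :=
  exists c : {set gT} -> algC,
    a = (\sum_(al in classes [set: gT]) c al *: Eclass al)%R.

Definition munit (g1 g2 : gT) : MG := [ffun p => ((p.1 == g1) && (p.2 == g2) : nat)%:R]%R.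
Definition mx_mul (m m' : MG) : MG :=
  [ffun p => \sum_(h : gT) m (p.1, h) * m' (h, p.2)]%R.

(* V(g)(x) = g x g^-1, extended linearly: V(a) = sum_g a_g V(g) *)
Definition Vg (g : gT) : MG := (\sum_(x : gT) munit (g * x * g^-1)%g x)%R.
Definition Vrep (a : CG) : MG := (\sum_(g : gT) a g *: Vg g)%R.

Definition pclass (p : gT * gT) : {set gT * gT} :=
  [set (g * p.1 * g^-1, g * p.2 * g^-1) | g : gT].
Definition invol_pairs : {set gT * gT} :=
  [set p : gT * gT | (p.1 * p.1 == 1) && (p.2 * p.2 == 1)].
Definition pair_classes : {set {set gT * gT}} :=
  [set pclass p | p in invol_pairs].

Definition Ebeta (be : {set gT * gT}) : MG := (\sum_(q in be) munit q.1 q.2)%R.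

Definition inB (m : MG) : Prop :=
  exists c : {set gT * gT} -> algC,
    m = (\sum_(be in pair_classes) c be *: Ebeta be)%R.

(* H = A (+) B realised inside CG x MG *)
Local Notation HV := (CG * MG)%type.
Definition inH (x : HV) : Prop := inA x.1 /\ inB x.2.
Definition Apart (x : HV) : Prop := inA x.1 /\ x.2 = 0%R.
Definition Bpart (x : HV) : Prop := x.1 = 0%R /\ inB x.2.

(* (a + b)(a' + b') = a a' + V(a) b' + b V(a') + b b' *)
Definition hmul (x y : HV) : HV :=
  (ga_mul x.1 y.1,
   mx_mul (Vrep x.1) y.2 + mx_mul x.2 (Vrep y.1) + mx_mul x.2 y.2)%R.
End Construction.

(* Main.v *)
Require Import Defs.
From mathcomp Require Import all_boot all_order all_algebra all_fingroup all_field.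
Set Implicit Arguments. Unset Strict Implicit. Unset Printing Implicit Defensive.
Import GRing.Theory Num.Theory.
Local Open Scope ring_scope.

Section S.
Variable gT : finGroupType.
Local Notation CG := {ffun gT -> algC^o}.
Local Notation MG := {ffun gT * gT -> algC^o}.

Definition Ac (a : CG) := forall (x g : gT), a (x ^ g)%g = a x.

Lemma memJ_classes (al : {set gT}) x g : al \in classes [set: gT] ->
  ((x ^ g)%g \in al) = (x \in al).
Proof.
move=> /repr_classesP [_ ->].
by apply/class_eqP/class_eqP; rewrite classGidl ?inE.
Qed.

Lemma inA_Ac a : inA a -> Ac a.
Proof.
move=> [c ->] x g; rewrite !sum_ffunE; apply: eq_bigr => al Hal.
by rewrite !ffunE memJ_classes.
Qed.

Lemma Ac_inA a : Ac a -> inA a.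
Proof.
move=> Ha; exists (fun al => a (repr al)); apply/ffunP => x.
rewrite sum_ffunE (bigD1 (x ^: [set: gT])%g) ?mem_classes ?inE //=.
rewrite big1 ?addr0.
  rewrite !ffunE class_refl. rewrite [X in _ = X]mulr1.
  have : repr (x ^: [set: gT])%g \in (x ^: [set: gT])%g by apply: mem_repr (class_refl _ _).
  have : repr (x ^: [set: gT])%g \in (x ^: [set: gT])%g by apply: mem_repr (class_refl _ _).
  by case/imsetP => g _ ->; rewrite Ha.
move=> al /andP [Hal Hne]; rewrite !ffunE.
case Hx: (x \in al); last by rewrite /= ?scaler0 ?mulr0.
case/repr_classesP: Hal => _ E.
move: Hx Hne; rewrite [in X in X -> _]E => /class_eqP E2.
by rewrite E2 -E eqxx.
Qed.

Lemma ga_mulE (a b : CG) x : ga_mul a b x = \sum_y a y * b (y^-1 * x)%g.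
Proof. by rewrite ffunE. Qed.

Lemma ga_mulA (a b c : CG) : ga_mul a (ga_mul b c) = ga_mul (ga_mul a b) c.
Proof.
apply/ffunP => x; rewrite !ga_mulE.
under [RHS]eq_bigr do rewrite ga_mulE mulr_suml.
rewrite exchange_big; apply: eq_bigr => z _.
rewrite ga_mulE mulr_sumr [in RHS](reindex_inj (mulgI z)) /=.
apply: eq_bigr => w _.
by rewrite mulKg invMg mulgA mulrA.
Qed.

Lemma ga_mul0l (b : CG) : ga_mul 0 b = 0.
Proof. by apply/ffunP => x; rewrite ga_mulE ffunE big1 // => y _; rewrite ffunE mul0r. Qed.
Lemma ga_mul0r (b : CG) : ga_mul b 0 = 0.
Proof. by apply/ffunP => x; rewrite ga_mulE ffunE big1 // => y _; rewrite ffunE mulr0. Qed.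

Definition e1 : CG := [ffun x => ((x == 1%g) : nat)%:R].

Lemma ga_mul1l (b : CG) : ga_mul e1 b = b.
Proof.
apply/ffunP => x; rewrite ga_mulE (bigD1 1%g) //= big1 ?addr0.
  by rewrite ffunE eqxx mul1r invg1 mul1g.
by move=> y /negbTE Hy; rewrite ffunE Hy mul0r.
Qed.
Lemma ga_mul1r (b : CG) : ga_mul b e1 = b.
Proof.
apply/ffunP => x; rewrite ga_mulE (bigD1 x) //= big1 ?addr0.
  by rewrite ffunE mulVg eqxx mulr1.
move=> y Hy; rewrite ffunE.
case: eqP => H; last by rewrite mulr0.
by move: Hy; rewrite -(mulKVg y x) H mulg1 eqxx.
Qed.

Lemma Ac_e1 : Ac e1.
Proof. by move=> x g; rewrite !ffunE conjg_eq1. Qed.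

Lemma Ac_mul a b : Ac a -> Ac b -> Ac (ga_mul a b).
Proof.
move=> Ha Hb x g; rewrite !ga_mulE.
rewrite (reindex_inj (conjg_inj g)) /=; apply: eq_bigr => y _.
by rewrite -conjVg -conjMg Ha Hb.
Qed.

Lemma Ac_comm a b : Ac b -> ga_mul a b = ga_mul b a.
Proof.
move=> Hb; apply/ffunP => x; rewrite !ga_mulE.
have inj : injective (fun y : gT => (y^-1 * x)%g) by move=> ? ? /mulIg/invg_inj.
rewrite (reindex_inj inj) /=.
apply: eq_bigr => y _.
rewrite mulrC; congr (_ * _).
by rewrite invMg invgK -(Hb y x) conjgE mulgA.
Qed.

Definition star_ga (a : CG) : CG := [ffun x => (a (x^-1)%g)^*].

Lemma star_gaK a : star_ga (star_ga a) = a.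
Proof. by apply/ffunP => x; rewrite !ffunE invgK conjCK. Qed.

Lemma star_ga_mul a b : star_ga (ga_mul a b) = ga_mul (star_ga b) (star_ga a).
Proof.
apply/ffunP => x; rewrite ffunE ga_mulE ga_mulE rmorph_sum.
rewrite [in RHS](reindex_inj (mulgI x)) /=.
apply: eq_bigr => y _; rewrite !ffunE rmorphM mulrC; congr (_ * _)%R.
  by rewrite invMg.
have E : (((x * y)^-1 * x)^-1 = y)%g by rewrite invMg invgK mulKg.
by rewrite E.
Qed.

Lemma star_ga_faithful a : ga_mul a (star_ga a) = 0 -> a = 0.
Proof.
move=> /ffunP /(_ 1%g); rewrite ga_mulE ffunE.
under eq_bigr do rewrite ffunE mulg1 invgK -normCK.
move=> /eqP; rewrite psumr_eq0 => [|y _]; last by rewrite exprn_ge0.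
move=> /allP H; apply/ffunP => y; rewrite ffunE.
have := H y (mem_index_enum _); rewrite expf_eq0 /= normr_eq0.
by move/eqP.
Qed.

Lemma Ac_star a : Ac a -> Ac (star_ga a).
Proof. by move=> Ha x g; rewrite !ffunE -conjVg Ha. Qed.

Lemma Ac_lin (c : algC) a b : Ac a -> Ac b -> Ac (c *: a + b).
Proof. by move=> Ha Hb x g; rewrite !ffunE Ha Hb. Qed.

Lemma Ac0 : Ac 0.
Proof. by move=> x g; rewrite !ffunE. Qed.


Lemma mx_mulE (m m' : MG) i j : mx_mul m m' (i, j) = \sum_h m (i, h) * m' (h, j).
Proof. by rewrite ffunE. Qed.

Lemma mx_mul0l (m : MG) : mx_mul 0 m = 0.
Proof. by apply/ffunP => -[i j]; rewrite mx_mulE ffunE big1 // => h _; rewrite ffunE mul0r. Qed.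
Lemma mx_mul0r (m : MG) : mx_mul m 0 = 0.
Proof. by apply/ffunP => -[i j]; rewrite mx_mulE ffunE big1 // => h _; rewrite ffunE mulr0. Qed.
Lemma mx_mulDl (m1 m2 m : MG) : mx_mul (m1 + m2) m = mx_mul m1 m + mx_mul m2 m.
Proof.
apply/ffunP => -[i j]; rewrite mx_mulE [RHS]ffunE !mx_mulE -big_split /=.
by apply: eq_bigr => h _; rewrite ffunE mulrDl.
Qed.
Lemma mx_mulDr (m1 m2 m : MG) : mx_mul m (m1 + m2) = mx_mul m m1 + mx_mul m m2.
Proof.
apply/ffunP => -[i j]; rewrite mx_mulE [RHS]ffunE !mx_mulE -big_split /=.
by apply: eq_bigr => h _; rewrite ffunE mulrDr.
Qed.
Lemma mx_mulA (m1 m2 m3 : MG) : mx_mul m1 (mx_mul m2 m3) = mx_mul (mx_mul m1 m2) m3.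
Proof.
apply/ffunP => -[i j]; rewrite !mx_mulE.
under eq_bigr do rewrite mx_mulE mulr_sumr.
under [RHS]eq_bigr do rewrite mx_mulE mulr_suml.
rewrite exchange_big; apply: eq_bigr => k _; apply: eq_bigr => h _.
by rewrite mulrA.
Qed.

Lemma conj_eq (i h g : gT) : (i == g * h * g^-1)%g = (h == i ^ g)%g.
Proof.
rewrite conjgE; apply/eqP/eqP => [->|->].
  by rewrite mulgKV mulKg.
by rewrite mulKVg mulgK.
Qed.

Lemma VE (a : CG) i j : Vrep a (i, j) = \sum_g a g * ((i == g * j * g^-1)%g : nat)%:R.
Proof.
rewrite sum_ffunE; apply: eq_bigr => g _; rewrite ffunE sum_ffunE.
rewrite (bigD1 j) //= big1 ?addr0.
  by rewrite ffunE /= eqxx andbT.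
by move=> x /negbTE Hx; rewrite ffunE /= (eq_sym j) Hx andbF.
Qed.

Lemma Vrep0 : Vrep (0 : CG) = 0.
Proof. by apply/ffunP => -[i j]; rewrite VE ffunE big1 // => g _; rewrite ffunE mul0r. Qed.

Lemma VmulE (a : CG) (b : MG) i j :
  mx_mul (Vrep a) b (i, j) = \sum_g a g * b ((i ^ g)%g, j).
Proof.
rewrite mx_mulE; under eq_bigr do rewrite VE mulr_suml.
rewrite exchange_big; apply: eq_bigr => g _.
rewrite (bigD1 (i ^ g)%g) //= big1 ?addr0.
  by rewrite conj_eq eqxx mulr1.
by move=> h /negbTE Hh; rewrite conj_eq Hh mulr0 mul0r.
Qed.

Lemma mulVE (a : CG) (b : MG) i j :
  mx_mul b (Vrep a) (i, j) = \sum_g a g * b (i, (g * j * g^-1)%g).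
Proof.
rewrite mx_mulE; under eq_bigr do rewrite VE mulr_sumr.
rewrite exchange_big; apply: eq_bigr => g _.
rewrite (bigD1 (g * j * g^-1)%g) //= big1 ?addr0.
  by rewrite eqxx mulr1 mulrC.
by move=> h /negbTE Hh; rewrite Hh mulr0 mulr0.
Qed.

Lemma Vrep_mul (a b : CG) : Vrep (ga_mul a b) = mx_mul (Vrep a) (Vrep b).
Proof.
apply/ffunP => -[i j]; rewrite VE VmulE.
under eq_bigr do rewrite ga_mulE mulr_suml.
rewrite exchange_big; apply: eq_bigr => y _.
rewrite VE mulr_sumr (reindex_inj (mulgI y)) /=.
apply: eq_bigr => k _.
rewrite mulKg mulrA; congr (_ * _).
rewrite !conj_eq. have E : (i ^ (y * k) = (i ^ y) ^ k)%g by exact: conjgM.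
by rewrite E.
Qed.

Lemma Vrep_e1l (m : MG) : mx_mul (Vrep e1) m = m.
Proof.
apply/ffunP => -[i j]; rewrite VmulE (bigD1 1%g) //= big1 ?addr0.
  by rewrite ffunE eqxx mul1r conjg1.
by move=> g /negbTE Hg; rewrite ffunE Hg mul0r.
Qed.

Lemma Vrep_e1r (m : MG) : mx_mul m (Vrep e1) = m.
Proof.
apply/ffunP => -[i j]; rewrite mulVE (bigD1 1%g) //= big1 ?addr0.
  by rewrite ffunE eqxx mul1r invg1 mulg1 mul1g.
by move=> g /negbTE Hg; rewrite ffunE Hg mul0r.
Qed.


Local Notation IP := (invol_pairs gT).

Definition pc (p : gT * gT) (g : gT) : gT * gT := ((p.1 ^ g)%g, (p.2 ^ g)%g).

Lemma pcM p g h : pc p (g * h)%g = pc (pc p g) h.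
Proof. by rewrite /pc /= !conjgM. Qed.
Lemma pcK p g : pc (pc p g) g^-1%g = p.
Proof. by rewrite /pc /= !conjgK; case: p. Qed.
Lemma pc1 p : pc p 1%g = p.
Proof. by rewrite /pc /= !conjg1; case: p. Qed.

Lemma invol_pc p g : (pc p g \in IP) = (p \in IP).
Proof. by rewrite !inE /= -!conjMg !conjg_eq1. Qed.

Lemma invol_c1 i j g : (((i ^ g)%g, j) \in IP) = ((i, j) \in IP).
Proof. by rewrite !inE /= -!conjMg !conjg_eq1. Qed.
Lemma invol_c2 i j g : ((i, (j ^ g)%g) \in IP) = ((i, j) \in IP).
Proof. by rewrite !inE /= -!conjMg !conjg_eq1. Qed.

Definition Bc (m : MG) :=
  (forall p, p \notin IP -> m p = 0) /\ (forall p g, m (pc p g) = m p).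

Lemma Bc0 : Bc 0.
Proof. by split=> [p _|p g]; rewrite !ffunE. Qed.

Lemma Bc_lin (c : algC) m m' : Bc m -> Bc m' -> Bc (c *: m + m').
Proof.
move=> [S1 I1] [S2 I2]; split => [p Hp|p g]; rewrite !ffunE.
  by rewrite S1 // S2 // ?mulr0 ?scaler0 addr0.
by rewrite I1 I2.
Qed.

Lemma invol_split p : p \notin IP -> forall h,
  ((p.1, h) \notin IP) || ((h, p.2) \notin IP).
Proof.
move=> Hp h; move: Hp; rewrite !inE /= !negb_and => /orP [H|H].
  by rewrite H.
by rewrite H !orbT.
Qed.

Lemma Bc_mul m m' : Bc m -> Bc m' -> Bc (mx_mul m m').
Proof.
move=> [S1 I1] [S2 I2]; split => [[i j] Hp|[i j] g]; rewrite !mx_mulE.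
  apply: big1 => h _; case/orP: (invol_split Hp h) => H.
    by rewrite S1 // mul0r.
  by rewrite S2 // mulr0.
rewrite (reindex_inj (conjg_inj g)) /=; apply: eq_bigr => h _.
by rewrite -(I1 (i, h) g) -(I2 (h, j) g).
Qed.

Lemma Bc_Vl a m : Ac a -> Bc m -> Bc (mx_mul (Vrep a) m).
Proof.
move=> Ha [S1 I1]; split => [[i j] Hp|[i j] k]; rewrite !VmulE.
  apply: big1 => g _; rewrite S1 ?mulr0 //.
  by rewrite invol_c1.
rewrite /pc /= ?VmulE (reindex_inj (conjg_inj k)) /=.
apply: eq_bigr => g _; rewrite Ha -conjJg.
by rewrite -[X in _ * m X]/(pc ((i ^ g)%g, j) k) I1.
Qed.

Lemma Bc_Vr a m : Ac a -> Bc m -> Bc (mx_mul m (Vrep a)).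
Proof.
move=> Ha [S1 I1]; split => [[i j] Hp|[i j] k]; rewrite !mulVE.
  apply: big1 => g _; rewrite S1 ?mulr0 //.
  have -> : (g * j * g^-1 = j ^ g^-1)%g by rewrite conjgE invgK mulgA.
  by rewrite invol_c2.
rewrite /pc /= ?mulVE (reindex_inj (conjg_inj k)) /=.
apply: eq_bigr => g _; rewrite Ha.
have E : forall x y : gT, (y * x * y^-1 = x ^ y^-1)%g by move=> x y; rewrite conjgE invgK mulgA.
rewrite !E -conjVg -conjJg.
by rewrite -[X in _ * m X]/(pc (i, (j ^ g^-1)%g) k) I1.
Qed.

Lemma Vrep_comm a m : Bc m -> mx_mul (Vrep a) m = mx_mul m (Vrep a).
Proof.
move=> [S1 I1]; apply/ffunP => -[i j]; rewrite VmulE mulVE.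
apply: eq_bigr => g _; congr (_ * _).
have E : (g * j * g^-1 = j ^ g^-1)%g by rewrite conjgE invgK mulgA.
by rewrite E -(I1 ((i ^ g)%g, j) (g^-1)%g) /pc /= conjgK.
Qed.

Definition star_mx (m : MG) : MG := [ffun p => (m (p.2, p.1))^*].

Lemma star_mxK m : star_mx (star_mx m) = m.
Proof. by apply/ffunP => -[i j]; rewrite !ffunE /= conjCK. Qed.

Lemma star_mx_mul m m' : star_mx (mx_mul m m') = mx_mul (star_mx m') (star_mx m).
Proof.
apply/ffunP => -[i j]; rewrite ffunE /= !mx_mulE rmorph_sum.
by apply: eq_bigr => h _; rewrite !ffunE /= rmorphM mulrC.
Qed.

Lemma star_mx_faithful m : mx_mul m (star_mx m) = 0 -> m = 0.
Proof.
move=> H; apply/ffunP => -[i j]; move/ffunP: H => /(_ (i, i)).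
rewrite mx_mulE ffunE.
under eq_bigr do rewrite ffunE /= -normCK.
move=> /eqP; rewrite psumr_eq0 => [|y _]; last by rewrite exprn_ge0.
move=> /allP H; rewrite ffunE.
have := H j (mem_index_enum _); rewrite expf_eq0 /= normr_eq0.
by move/eqP.
Qed.

Lemma Bc_star m : Bc m -> Bc (star_mx m).
Proof.
move=> [S1 I1]; split => [[i j] Hp|[i j] k]; rewrite !ffunE /=.
  rewrite S1 ?rmorph0 //; move: Hp; rewrite !inE /=.
  by rewrite andbC.
by rewrite -[X in m X]/(pc (j, i) k) I1.
Qed.


Lemma EbetaE (be : {set gT * gT}) p : Ebeta be p = ((p \in be) : nat)%:R.
Proof.
rewrite sum_ffunE; case: (boolP (p \in be)) => Hp.
  rewrite (bigD1 p) //= big1 ?addr0; first by rewrite ffunE !eqxx.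
  move=> q /andP [_ Hq]; rewrite ffunE.
  case: eqP => [E1|//]; case: eqP => [E2|//].
  have Epq : p = q by rewrite [p]surjective_pairing [q]surjective_pairing E1 E2.
  by move: Hq; rewrite Epq eqxx.
apply: big1 => q Hq; rewrite ffunE.
case: eqP => [E1|//]; case: eqP => [E2|//].
have Epq : p = q by rewrite [p]surjective_pairing [q]surjective_pairing E1 E2.
by move: Hp; rewrite Epq Hq.
Qed.

Lemma mem_pclass q p : (q \in pclass p) <-> (exists g, q = pc p g).
Proof.
split.
  case/imsetP => g _ ->; exists g^-1%g.
  by rewrite /pc !conjgE !invgK !mulgA.
case=> g ->; apply/imsetP; exists g^-1%g => //.
by rewrite /pc !conjgE !invgK !mulgA.
Qed.

Lemma pclass_pc q p0 g : q \in pclass p0 -> pc q g \in pclass p0.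
Proof.
case/mem_pclass => h ->; apply/mem_pclass; exists (h * g)%g.
by rewrite pcM.
Qed.

Lemma pclass_pcE q p0 g : (pc q g \in pclass p0) = (q \in pclass p0).
Proof.
apply/idP/idP => [H|]; last exact: pclass_pc.
by rewrite -(pcK q g); apply: pclass_pc.
Qed.

Lemma pclass_invol q p0 : p0 \in IP -> q \in pclass p0 -> q \in IP.
Proof. by move=> H /mem_pclass [g ->]; rewrite invol_pc. Qed.

Lemma pclass_self (p : gT * gT) : p \in pclass p.
Proof. by apply/mem_pclass; exists 1%g; rewrite pc1. Qed.

Lemma pclass_eq (p p0 : gT * gT) : p \in pclass p0 -> pclass p = pclass p0.
Proof.
move=> Hp; apply/setP => q; apply/idP/idP.
  by case/mem_pclass => g ->; apply: pclass_pc.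
case/mem_pclass: Hp => g Ep; case/mem_pclass => h ->.
have -> : p0 = pc p g^-1%g by rewrite Ep pcK.
by rewrite -pcM; apply: pclass_pc; apply: pclass_self.
Qed.

Lemma Bc_add m m' : Bc m -> Bc m' -> Bc (m + m').
Proof. by move=> H1 H2; rewrite -[m]scale1r; apply: Bc_lin. Qed.

Lemma Bc_Ebeta be : be \in pair_classes gT -> Bc (Ebeta be).
Proof.
case/imsetP => p0 Hp0 ->; split => [p Hp|p g]; rewrite !EbetaE.
  by case: (boolP (p \in pclass p0)) => // /(pclass_invol Hp0); rewrite (negbTE Hp).
by rewrite pclass_pcE.
Qed.

Lemma inB_Bc m : inB m -> Bc m.
Proof.
case=> c ->; apply: (big_ind Bc); [exact: Bc0 | exact: Bc_add |].
move=> be Hbe; rewrite -[_ *: _]addr0; apply: Bc_lin; [exact: Bc_Ebeta | exact: Bc0].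
Qed.

Lemma Bc_inB m : Bc m -> inB m.
Proof.
move=> [S1 I1]; exists (fun be => m (repr be)); apply/ffunP => p.
rewrite sum_ffunE; case: (boolP (p \in IP)) => Hp; last first.
  rewrite S1 // big1 // => be /imsetP [p0 Hp0 ->].
  rewrite ffunE EbetaE; case: (boolP (p \in pclass p0)) => H.
    by move: Hp; rewrite (pclass_invol Hp0 H).
  by rewrite /= ?mulr0 ?scaler0.
rewrite (bigD1 (pclass p)) /=; last by apply/imsetP; exists p.
rewrite big1 ?addr0.
  rewrite ffunE EbetaE pclass_self /=.
  have : repr (pclass p) \in pclass p by apply: mem_repr (pclass_self p).
  by case/mem_pclass => g ->; rewrite I1 [RHS]mulr1.
move=> be /andP [/imsetP [p0 Hp0 ->] Hne]; rewrite ffunE EbetaE.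
case: (boolP (p \in pclass p0)) => H; last by rewrite /= ?mulr0 ?scaler0.
by move: Hne; rewrite (pclass_eq H) eqxx.
Qed.

End S.

Section Gen.
Variables (T : Type) (mul : T -> T -> T) (star : T -> T) (z : T).
Hypothesis mulA : forall x y w, mul x (mul y w) = mul (mul x y) w.
Hypothesis starM : forall x y, star (mul x y) = mul (star y) (star x).
Hypothesis starK : forall x, star (star x) = x.
Hypothesis faith : forall x, mul x (star x) = z -> x = z.
Hypothesis mul0l : forall x, mul z x = z.

Definition pw x n := foldl mul x (nseq n x).

Lemma foldl_nseq y x n : foldl mul (mul y x) (nseq n x) = mul (foldl mul y (nseq n x)) x.
Proof. by elim: n y => [//|n IH] y /=; rewrite IH. Qed.

Lemma pwS x n : pw x n.+1 = mul (pw x n) x.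
Proof. by rewrite /pw /= foldl_nseq. Qed.

Lemma pw_add x a b : pw x (a + b).+1 = mul (pw x a) (pw x b).
Proof.
elim: b => [|b IH]; first by rewrite addn0 pwS.
by rewrite addnS pwS IH pwS mulA.
Qed.

Lemma star_pw x n : star x = x -> star (pw x n) = pw x n.
Proof.
move=> Hx; elim: n => [//|n IH].
have E := pw_add x 0 n; rewrite add0n pwS in E.
by rewrite pwS starM IH Hx E.
Qed.

Lemma pw_mono x n k : pw x n = z -> pw x (n + k) = z.
Proof. by move=> H; elim: k => [|k IH]; rewrite ?addn0 // addnS pwS IH mul0l. Qed.

Lemma pw_herm x n : star x = x -> pw x n = z -> x = z.
Proof.
move=> Hx; elim: n {-2}n (leqnn n) => [|N IH] n Hn.
  by move: Hn; rewrite leqn0 => /eqP ->.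
case: n Hn => [_ //|n] Hn Hz.
apply: (IH n); first by rewrite -ltnS.
apply: faith; rewrite star_pw // -pw_add -addSn.
exact: pw_mono.
Qed.

Lemma pw_nil y n : pw (mul y (star y)) n = z -> y = z.
Proof.
move=> H; apply: faith; apply: (pw_herm (n:=n)) => //.
by rewrite starM starK.
Qed.
End Gen.

Section Main.
Variable gT : finGroupType.
Local Notation CG := {ffun gT -> algC^o}.
Local Notation MG := {ffun gT * gT -> algC^o}.
Local Notation HV := (CG * MG)%type.

Lemma fst_nprod (y : HV) s : (nprod (@hmul gT) y s).1 = foldl (@ga_mul gT) y.1 (map fst s).
Proof. by elim: s y => [//|x s IH] y; apply: IH. Qed.

Lemma hmul00 (d c : MG) : hmul (0, d) (0, c) = (0, mx_mul d c).
Proof. by rewrite /hmul /= ga_mul0l Vrep0 mx_mul0l mx_mul0r !add0r. Qed.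

Lemma nprod0 (d c : MG) n :
  nprod (@hmul gT) (0, d) (nseq n (0, c)) = (0, foldl (@mx_mul gT) d (nseq n c)).
Proof.
rewrite /nprod; elim: n d => [//|n IH] d /=.
by rewrite hmul00 IH.
Qed.

Lemma lemma2p8_aux :
  [/\ assoc_unital_alg (@inH gT) (@hmul gT),
      semisimple_alg (@inH gT) (@hmul gT),
      central_subalgebra (@inH gT) (@hmul gT) (@Apart gT) &
      two_sided_ideal (@inH gT) (@hmul gT) (@Bpart gT)].
Proof.
split.
- split.
  + move=> [a b] [a' b'] [/= Ha Hb] [/= Ha' Hb']; split => /=.
      by apply: Ac_inA; apply: Ac_mul; apply: inA_Ac.
    apply: Bc_inB; apply: Bc_add; first apply: Bc_add.
    * by apply: Bc_Vl; [apply: inA_Ac | apply: inB_Bc].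
    * by apply: Bc_Vr; [apply: inA_Ac | apply: inB_Bc].
    * by apply: Bc_mul; apply: inB_Bc.
  + move=> [a b] [a' b'] [a'' b''] _ _ _; rewrite /hmul /=.
    congr pair; first exact: ga_mulA.
    rewrite !Vrep_mul !mx_mulDl !mx_mulDr !mx_mulA.
    rewrite !addrA -!addrA; congr (_ + _); congr (_ + _); rewrite addrCA; congr (_ + _).
    rewrite [RHS]addrCA; congr (_ + _); exact: addrCA.
  + exists (e1 gT, 0).
      by split; [apply: Ac_inA; apply: Ac_e1 | apply: Bc_inB; apply: Bc0].
    move=> [a b] _; rewrite /hmul /=.
    by rewrite ga_mul1l ga_mul1r Vrep_e1l Vrep_e1r !mx_mul0l !mx_mul0r !addr0 add0r.
- move=> I [HIsub HIH HImul] [n Hn].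
  have HA : forall x, I x -> x.1 = 0.
    move=> [a b] Hab /=.
    have HaA : inA a by case: (HIH _ Hab).
    have Hs : inH (star_ga a, 0 : MG).
      by split; [apply: Ac_inA; apply: Ac_star; apply: inA_Ac | apply: Bc_inB; apply: Bc0].
    have Hy := (HImul _ _ Hs Hab).2.
    have := Hn _ (nseq_tuple n (hmul (a, b) (star_ga a, 0))) Hy.
    move=> /(_ (fun i => ltac:(by rewrite tnth_nseq))) /(congr1 fst).
    rewrite fst_nprod /= map_nseq /=.
    move=> H; apply: (pw_nil (mul:=@ga_mul gT) (star:=@star_ga gT) (z:=0) _ _ _ _ _ H).
    + by move=> *; apply: ga_mulA.
    + by move=> *; apply: star_ga_mul.
    + by move=> *; apply: star_gaK.
    + by move=> *; apply: star_ga_faithful.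
    + by move=> *; apply: ga_mul0l.
  move=> [a b] Hab.
  have Ha : a = 0 := HA _ Hab.
  subst a.
  have HbB : inB b by case: (HIH _ Hab).
  have Hs : inH (0 : CG, star_mx b).
    by split; [apply: Ac_inA; apply: Ac0 | apply: Bc_inB; apply: Bc_star; apply: inB_Bc].
  have Hy := (HImul _ _ Hs Hab).2.
  rewrite hmul00 in Hy.
  have := Hn _ (nseq_tuple n (0 : CG, mx_mul b (star_mx b))) Hy.
  move=> /(_ (fun i => ltac:(by rewrite tnth_nseq))).
  rewrite nprod0 => /(congr1 snd) /= H.
  congr pair.
  apply: (pw_nil (mul:=@mx_mul gT) (star:=@star_mx gT) (z:=0) _ _ _ _ _ H).
  + by move=> *; apply: mx_mulA.
  + by move=> *; apply: star_mx_mul.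
  + by move=> *; apply: star_mxK.
  + by move=> *; apply: star_mx_faithful.
  + by move=> *; apply: mx_mul0l.
- split.
  + split; first by split => //; apply: Ac_inA; apply: Ac0.
    move=> c [a b] [a' b'] [/= Ha Hb] [/= Ha' Hb']; split => /=.
      by apply: Ac_inA; apply: Ac_lin; apply: inA_Ac.
    by rewrite Hb Hb' scaler0 addr0.
  + move=> [a b] [/= Ha Hb]; split => //=; rewrite Hb; apply: Bc_inB; apply: Bc0.
  + move=> [a b] [a' b'] [/= Ha Hb] [/= Ha' Hb']; rewrite Hb Hb' /hmul /=; split.
      by apply: Ac_inA; apply: Ac_mul; apply: inA_Ac.
    by rewrite !mx_mul0l !mx_mul0r !addr0.
  + move=> [a b] [a' b'] [/= Ha Hb] [/= Ha' Hb']; rewrite Hb /hmul /=.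
    congr pair; first by apply: Ac_comm; apply: inA_Ac.
    rewrite !mx_mul0l !mx_mul0r addr0 add0r addr0.
    by rewrite addr0; apply: Vrep_comm; apply: inB_Bc.
- split.
  + split; first by split => //; apply: Bc_inB; apply: Bc0.
    move=> c [a b] [a' b'] [/= Ha Hb] [/= Ha' Hb']; split => /=.
      by rewrite Ha Ha' scaler0 addr0.
    by apply: Bc_inB; apply: Bc_lin; apply: inB_Bc.
  + move=> [a b] [/= Ha Hb]; split => //=; rewrite Ha; apply: Ac_inA; apply: Ac0.
  + move=> [a b] [a' b'] [/= Ha Hb] [/= Ha' Hb']; rewrite Ha' /hmul /=; split; split => /=.
    * exact: ga_mul0r.
    * rewrite Vrep0 mx_mul0r addr0; apply: Bc_inB; apply: Bc_add.
        by apply: Bc_Vl; [apply: inA_Ac | apply: inB_Bc].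
      by apply: Bc_mul; apply: inB_Bc.
    * exact: ga_mul0l.
    * rewrite Vrep0 mx_mul0l add0r; apply: Bc_inB; apply: Bc_add.
        by apply: Bc_Vr; [apply: inA_Ac | apply: inB_Bc].
      by apply: Bc_mul; apply: inB_Bc.
Qed.

End Main.

Theorem lemma2p8 (gT : finGroupType) :
  [/\ assoc_unital_alg (@inH gT) (@hmul gT),
      semisimple_alg (@inH gT) (@hmul gT),
      central_subalgebra (@inH gT) (@hmul gT) (@Apart gT) &
      two_sided_ideal (@inH gT) (@hmul gT) (@Bpart gT)].
Proof. exact: lemma2p8_aux. Qed.
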